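(* Consider a platoon $i$ of CAVs with members $j\in\{0,1,\dots,m_i\}$ ($j=0$ the leader), each obeying $\dot p_{i,j}=v_{i,j}$, $\dot v_{i,j}=u_{i,j}$, subject to $u_{\min}\le u_{i,j}(t)\le u_{\max}$, $0<v_{\min}\le v_{i,j}(t)\le v_{\max}$, and $p_{i,j-1}(t)-p_{i,j}(t)\ge\Delta_i+l_c$ for $j\in\{1,\dots,m_i\}$. Assume that at time $t_i^0$ all members have equal speed and $p_{i,j-1}(t_i^0)-p_{i,j}(t_i^0)-l_c=\Delta_i$. Let $u^*_{i,0}(t)=6a_it+2b_i$, $t\in[t_i^0,t_i^f]$, be the leader's optimal control, whose control and speed trajectories satisfy the control and speed constraints. Then for every follower $j\in\{1,\dots,m_i\}$, the control input $u_{i,j}(t)=u^*_{i,0}(t)$ for all $t\in[t_i^0,t_i^f]$ is energy- and time-optimal (it yields linear control, quadratic speed and cubic position trajectories of the energy-optimal form) and satisfies the control constraint, the speed constraint, and the intra-platoon rear-end safety constraint on $[t_i^0,t_i^f]$.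
   Context: The leader's optimal control is obtained from the leader's problem: the leader uses the unconstrained energy-optimal form $u_i(t)=6a_it+2b_i$, $v_i(t)=3a_it^2+2b_it+c_i$, $p_i(t)=a_it^3+b_it^2+c_it+d_i$ with boundary conditions $p_i(t_i^0)=p_i^0$, $v_i(t_i^0)=v_i^0$, $p_i(t_i^f)=p_i^f$, $u_i(t_i^f)=0$, with minimal exit time $t_i^f$ chosen so that none of the control, speed and safety constraints is violated. $l_c$ is the vehicle length and $\Delta_i$ the prescribed inter-vehicle gap. *)

(* Defs.v *)
From Stdlib Require Import Reals.
From Coquelicot Require Import Coquelicot.
Open Scope R_scope.

Definition opt_u (a b : R) (t : R) : R := 6 * a * t + 2 * b.
Definition opt_v (a b c : R) (t : R) : R := 3 * a * t ^ 2 + 2 * b * t + c.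
Definition opt_p (a b c d : R) (t : R) : R := a * t ^ 3 + b * t ^ 2 + c * t + d.

(* Main.v *)
Require Import Defs.
From Stdlib Require Import Reals Lra Lia.
From Coquelicot Require Import Coquelicot.
Open Scope R_scope.

Lemma const_on (f : R -> R) t0 tf :
  (forall t, t0 <= t <= tf -> is_derive f t 0) ->
  forall t, t0 <= t <= tf -> f t = f t0.
Proof.
  intros H t Ht. destruct (Req_dec t t0) as [->|Hn]; [reflexivity|].
  symmetry. apply (eq_is_derive f t0 t).
  - intros s Hs. apply H. lra.
  - lra.
Qed.

Lemma diff_const (f g df dg : R -> R) t0 tf :
  (forall t, t0 <= t <= tf -> is_derive f t (df t)) ->
  (forall t, t0 <= t <= tf -> is_derive g t (dg t)) ->
  (forall t, t0 <= t <= tf -> df t = dg t) ->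
  forall t, t0 <= t <= tf -> f t - g t = f t0 - g t0.
Proof.
  intros Hf Hg Hd. apply (const_on (fun t => f t - g t) t0 tf).
  intros t Ht. replace 0 with (df t - dg t) by (rewrite Hd; auto; lra).
  apply (is_derive_minus f g); auto.
Qed.

Lemma dp a b c d t : is_derive (opt_p a b c d) t (opt_v a b c t).
Proof. unfold opt_p, opt_v. auto_derive; auto. ring. Qed.
Lemma dv a b c t : is_derive (opt_v a b c) t (opt_u a b t).
Proof. unfold opt_u, opt_v. auto_derive; auto. ring. Qed.

Theorem lemma1
  (m : nat) (p v u : nat -> R -> R)
  (a b c d t0 tf umin umax vmin vmax Delta lc : R)
  (Htf : t0 < tf) (Hvmin : 0 < vmin)
  (Hleader : forall t, t0 <= t <= tf ->
       u 0%nat t = opt_u a b t /\ v 0%nat t = opt_v a b c t /\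
       p 0%nat t = opt_p a b c d t)
  (Hleader_uf : u 0%nat tf = 0)
  (Hleader_u : forall t, t0 <= t <= tf -> umin <= u 0%nat t <= umax)
  (Hleader_v : forall t, t0 <= t <= tf -> vmin <= v 0%nat t <= vmax)
  (Hdyn_p : forall j t, (1 <= j <= m)%nat -> t0 <= t <= tf ->
       is_derive (p j) t (v j t))
  (Hdyn_v : forall j t, (1 <= j <= m)%nat -> t0 <= t <= tf ->
       is_derive (v j) t (u j t))
  (Hv0 : forall j, (1 <= j <= m)%nat -> v j t0 = v 0%nat t0)
  (Hp0 : forall j, (1 <= j <= m)%nat -> p (j - 1)%nat t0 - p j t0 - lc = Delta)
  (Hu : forall j t, (1 <= j <= m)%nat -> t0 <= t <= tf -> u j t = u 0%nat t) :
  forall j, (1 <= j <= m)%nat ->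
    (exists a' b' c' d', (forall t, t0 <= t <= tf ->
        u j t = opt_u a' b' t /\ v j t = opt_v a' b' c' t /\
        p j t = opt_p a' b' c' d' t) /\ u j tf = 0) /\
    (forall t, t0 <= t <= tf ->
        umin <= u j t <= umax /\ vmin <= v j t <= vmax /\
        p (j - 1)%nat t - p j t >= Delta + lc).
Proof.
  assert (Ht0 : t0 <= t0 <= tf) by lra.
  assert (HV : forall j t, (1 <= j <= m)%nat -> t0 <= t <= tf -> v j t = opt_v a b c t).
  { intros j t Hj Ht.
    assert (E := diff_const (v j) (opt_v a b c) (u j) (opt_u a b) t0 tf
      (fun s Hs => Hdyn_v j s Hj Hs) (fun s _ => dv a b c s)
      (fun s Hs => eq_trans (Hu j s Hj Hs) (proj1 (Hleader s Hs))) t Ht).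
    rewrite Hv0 in E by auto. destruct (Hleader t0 Ht0) as [_ [H1 _]].
    rewrite H1 in E. lra. }
  assert (HP : forall j t, (1 <= j <= m)%nat -> t0 <= t <= tf ->
     p j t - opt_p a b c d t = p j t0 - opt_p a b c d t0).
  { intros j t Hj Ht.
    exact (diff_const (p j) (opt_p a b c d) (v j) (opt_v a b c) t0 tf
      (fun s Hs => Hdyn_p j s Hj Hs) (fun s _ => dp a b c d s)
      (fun s Hs => HV j s Hj Hs) t Ht). }
  intros j Hj. split.
  - exists a, b, c, (d + (p j t0 - opt_p a b c d t0)). split.
    + intros t Ht. split; [|split].
      * rewrite Hu by auto. apply Hleader; auto.
      * apply HV; auto.
      * specialize (HP j t Hj Ht). unfold opt_p in *. lra.
    + rewrite Hu by (auto; lra). auto.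
  - intros t Ht. split; [|split].
    + rewrite Hu by auto. auto.
    + rewrite HV by auto. destruct (Hleader t Ht) as [_ [H1 _]]. rewrite <- H1. auto.
    + specialize (Hp0 j Hj).
      destruct j as [|k]; [lia|]. simpl (S k - 1)%nat in *. rewrite Nat.sub_0_r in *.
      destruct k as [|k].
      * destruct (Hleader t Ht) as [_ [_ H1]]. destruct (Hleader t0 Ht0) as [_ [_ H2]].
        specialize (HP 1%nat t Hj Ht). lra.
      * assert (Hk : (1 <= S k <= m)%nat) by lia.
        pose proof (HP (S k) t Hk Ht). pose proof (HP (S (S k)) t Hj Ht). lra.
Qed.
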